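(* Let $C$ and $C'$ be Ptolemy circles, and let $x_1,x_2,x_3$ be distinct points of $C$ and $x'_1,x'_2,x'_3$ distinct points of $C'$. Then there exists a unique Möbius homeomorphism $\varphi:C\to C'$ with $\varphi(x_i)=x'_i$ for $i=1,2,3$.
   Context: A Ptolemy circle is a circle in an extended Ptolemy metric space, endowed with the induced extended metric. Here an extended metric on a set $X$ is a map $d:X\times X\to[0,\infty]$ such that for some subset $\Omega(d)$ with at most one element, $d$ is a finite metric on $X\setminus\Omega(d)$, $d(x,\omega)=\infty$ for $x\notin\Omega(d)$, $\omega\in\Omega(d)$, and $d(\omega,\omega)=0$ (the point $\omega$ is written $\infty$); the topology has basis the open balls around finite points and the complements of closed balls. In product-of-distances expressions in which a single point equals $\infty$, factors involving $\infty$ are cancelled. The space is Ptolemy if $d(x,y)d(z,w)\le d(x,z)d(y,w)+d(x,w)d(y,z)$ for all quadruples. A circle is a subset $\sigma$ homeomorphic to $S^1$ such that for all distinct $x,y,z,w\in\sigma$ with $y,w$ in different components of $\sigma\setminus\{x,z\}$, $d(x,z)d(y,w)=d(x,y)d(z,w)+d(x,w)d(y,z)$. A quadruple is admissible if no entry occurs three or four times; $\mathrm{crt}(x,y,z,w)=(d(x,y)d(z,w):d(x,z)d(y,w):d(x,w)d(y,z))\in\mathbb{R}P^2$, with $\mathrm{crt}(x,y,z,\infty)=(d(x,y):d(x,z):d(y,z))$ and $\mathrm{crt}(x,y,\infty,\infty)=(0:1:1)$ (analogously for other positions). A Möbius map is an injective map preserving $\mathrm{crt}$ of all admissible quadruples.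 *)

(* Defs.v *)
From Stdlib Require Import Reals.
From Coquelicot Require Import Rbar.
Open Scope R_scope.

(*   Om : the set Omega(d) (at most one point, the point "infinity").   *)
Record EMS := {
  pt :> Type;
  d : pt -> pt -> Rbar;
  Om : pt -> bool;
  Om_atmost1 : forall a b, Om a = true -> Om b = true -> a = b;
  d_fin : forall x y, Om x = false -> Om y = false -> is_finite (d x y);
  d_nonneg : forall x y, Om x = false -> Om y = false -> 0 <= real (d x y);
  d_zero : forall x y, Om x = false -> Om y = false ->
             (real (d x y) = 0 <-> x = y);
  d_sym : forall x y, Om x = false -> Om y = false -> d x y = d y x;
  d_tri : forall x y z, Om x = false -> Om y = false -> Om z = false ->
             real (d x z) <= real (d x y) + real (d y z);
  d_inf : forall x w, Om x = false -> Om w = true ->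
             d x w = p_infty /\ d w x = p_infty;
  d_infinf : forall w, Om w = true -> d w w = Finite 0
}.

(* A single distance factor d(a,b) inside a product-of-distances expression,
   with the convention that factors involving the point infinity are
   cancelled (replaced by 1).  If both a and b are infinity, the factor is
   d(oo,oo) = 0. *)
Definition dfac {X : EMS} (a b : X) : R :=
  if xorb (Om X a) (Om X b) then 1 else real (d X a b).

Definition Ptolemy (X : EMS) : Prop :=
  forall x y z w : X,
    dfac x y * dfac z w <= dfac x z * dfac y w + dfac x w * dfac y z.

Definition basic_open {X : EMS} (B : X -> Prop) : Prop :=
  exists (x : X) (r : R), Om X x = false /\
    ( (forall y, B y <-> Rbar_lt (d X x y) (Finite r))
   \/ (forall y, B y <-> Rbar_lt (Finite r) (d X x y))).

Definition ems_open {X : EMS} (U : X -> Prop) : Prop :=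
  forall p, U p -> exists B, basic_open B /\ B p /\ (forall q, B q -> U q).

Definition R2_open (U : R * R -> Prop) : Prop :=
  forall p, U p -> exists e, 0 < e /\
    forall q, (fst q - fst p) ^ 2 + (snd q - snd p) ^ 2 < e ^ 2 -> U q.

Definition S1 (p : R * R) : Prop := (fst p) ^ 2 + (snd p) ^ 2 = 1.

Definition homeo_on {A B : Type}
  (openA : (A -> Prop) -> Prop) (openB : (B -> Prop) -> Prop)
  (SA : A -> Prop) (SB : B -> Prop) (f : A -> B) (g : B -> A) : Prop :=
  (forall a, SA a -> SB (f a)) /\
  (forall b, SB b -> SA (g b)) /\
  (forall a, SA a -> g (f a) = a) /\
  (forall b, SB b -> f (g b) = b) /\
  (forall V, openB V -> exists U, openA U /\
       forall a, SA a -> (V (f a) <-> U a)) /\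
  (forall U, openA U -> exists V, openB V /\
       forall b, SB b -> (U (g b) <-> V b)).

Definition ems_connected {X : EMS} (A : X -> Prop) : Prop :=
  ~ exists U V : X -> Prop, ems_open U /\ ems_open V /\
      (forall a, A a -> U a \/ V a) /\
      (exists a, A a /\ U a) /\ (exists a, A a /\ V a) /\
      (forall a, A a -> U a -> V a -> False).

Definition same_component {X : EMS} (S : X -> Prop) (y w : X) : Prop :=
  exists A : X -> Prop, (forall a, A a -> S a) /\ ems_connected A /\ A y /\ A w.

Definition is_circle (X : EMS) (sigma : X -> Prop) : Prop :=
  (exists (f : R * R -> X) (g : X -> R * R),
      homeo_on R2_open ems_open S1 sigma f g) /\
  (forall x y z w : X, sigma x -> sigma y -> sigma z -> sigma w ->
     x <> y -> x <> z -> x <> w -> y <> z -> y <> w -> z <> w ->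
     ~ same_component (fun p => sigma p /\ p <> x /\ p <> z) y w ->
     dfac x z * dfac y w = dfac x y * dfac z w + dfac x w * dfac y z).

(* Cross ratio triple crt(x,y,z,w), a representative in R^3 of a point of
   RP^2, with the conventions for infinity (cancellation when one entry is
   infinity; (0:1:1) and its analogues when two entries are infinity). *)
Definition crt {X : EMS} (x y z w : X) : R * R * R :=
  (dfac x y * dfac z w, dfac x z * dfac y w, dfac x w * dfac y z).

Definition proj_eq (u v : R * R * R) : Prop :=
  exists t : R, t <> 0 /\
    fst (fst u) = t * fst (fst v) /\ snd (fst u) = t * snd (fst v) /\
    snd u = t * snd v.

Definition admissible {T : Type} (x y z w : T) : Prop :=
  ~ (x = y /\ y = z) /\ ~ (x = y /\ y = w) /\
  ~ (x = z /\ z = w) /\ ~ (y = z /\ z = w).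

Definition moebius_on {X X' : EMS} (C : X -> Prop) (phi : X -> X') : Prop :=
  (forall a b, C a -> C b -> phi a = phi b -> a = b) /\
  (forall x y z w, C x -> C y -> C z -> C w -> admissible x y z w ->
     proj_eq (crt (phi x) (phi y) (phi z) (phi w)) (crt x y z w)).

Definition moebius_homeo {X X' : EMS} (C : X -> Prop) (C' : X' -> Prop)
  (phi : X -> X') : Prop :=
  (exists psi : X' -> X, homeo_on ems_open ems_open C C' phi psi) /\
  moebius_on C phi.

(* Main.v *)
Require Import Defs.
From Stdlib Require Import Reals Lra Psatz Classical ClassicalEpsilon.
From Coquelicot Require Import Rbar.
Open Scope R_scope.

Lemma dfac_ff (X:EMS) (a b:X): Om X a = false -> Om X b = false -> dfac a b = real (d X a b).
Proof. intros Ha Hb. unfold dfac. rewrite Ha, Hb. reflexivity. Qed.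
Lemma dfac_tf (X:EMS) (a b:X): Om X a = true -> Om X b = false -> dfac a b = 1.
Proof. intros Ha Hb. unfold dfac. rewrite Ha, Hb. reflexivity. Qed.
Lemma dfac_ft (X:EMS) (a b:X): Om X a = false -> Om X b = true -> dfac a b = 1.
Proof. intros Ha Hb. unfold dfac. rewrite Ha, Hb. reflexivity. Qed.

Lemma dfac_sym (X:EMS) (a b:X): dfac a b = dfac b a.
Proof.
  unfold dfac. destruct (Om X a) eqn:Ha, (Om X b) eqn:Hb; simpl; auto.
  - rewrite (Om_atmost1 X a b Ha Hb); reflexivity.
  - rewrite d_sym; auto.
Qed.

Lemma dfac_refl (X:EMS) (a:X): dfac a a = 0.
Proof.
  unfold dfac. destruct (Om X a) eqn:Ha; simpl.
  - rewrite d_infinf; auto.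
  - apply (proj2 (d_zero X a a Ha Ha)); reflexivity.
Qed.

Lemma dfac_pos (X:EMS) (a b:X): a <> b -> 0 < dfac a b.
Proof.
  intro Hab. unfold dfac. destruct (Om X a) eqn:Ha, (Om X b) eqn:Hb; simpl; try lra.
  - exfalso; apply Hab; apply (Om_atmost1 X a b Ha Hb).
  - pose proof (d_nonneg X a b Ha Hb). destruct H; auto.
    exfalso; apply Hab. apply (proj1 (d_zero X a b Ha Hb)); auto.
Qed.

Lemma dfac_nonneg (X:EMS) (a b:X): 0 <= dfac a b.
Proof.
  destruct (classic (a = b)) as [->|H].
  - rewrite dfac_refl; lra.
  - left; apply dfac_pos; auto.
Qed.

Lemma dfac_tri (X:EMS) (x y z:X): Om X x = false -> Om X y = false -> Om X z = false ->
  dfac x z <= dfac x y + dfac y z.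
Proof. intros. rewrite !dfac_ff by auto. apply d_tri; auto. Qed.

Lemma lt_ball (X:EMS) (o q:X) r: Om X o = false -> Om X q = false ->
  (Rbar_lt (d X o q) (Finite r) <-> dfac o q < r).
Proof.
  intros Ho Hq. rewrite dfac_ff by auto. pose proof (d_fin X o q Ho Hq) as H.
  unfold is_finite in H. rewrite <- H. simpl. tauto.
Qed.
Lemma gt_ball (X:EMS) (o q:X) r: Om X o = false -> Om X q = false ->
  (Rbar_lt (Finite r) (d X o q) <-> r < dfac o q).
Proof.
  intros Ho Hq. rewrite dfac_ff by auto. pose proof (d_fin X o q Ho Hq) as H.
  unfold is_finite in H. rewrite <- H. simpl. tauto.
Qed.
Lemma inf_ball1 (X:EMS) (o q:X) r: Om X o = false -> Om X q = true ->
  ~ Rbar_lt (d X o q) (Finite r).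
Proof. intros Ho Hq. destruct (d_inf X o q Ho Hq) as [-> _]. simpl. tauto. Qed.
Lemma inf_ball2 (X:EMS) (o q:X) r: Om X o = false -> Om X q = true ->
  Rbar_lt (Finite r) (d X o q).
Proof. intros Ho Hq. destruct (d_inf X o q Ho Hq) as [-> _]. simpl. tauto. Qed.

Lemma basic_fin (X:EMS) (B:X->Prop) p: basic_open B -> B p -> Om X p = false ->
  exists del, 0 < del /\ forall q, Om X q = false -> dfac p q < del -> B q.
Proof.
  intros [o [r [Ho [Hb|Hb]]]] Bp Hp.
  - apply Hb in Bp. apply (lt_ball X o p r Ho Hp) in Bp.
    exists (r - dfac o p). split; [lra|]. intros q Hq Hpq.
    apply Hb. apply (lt_ball X o q r Ho Hq).
    pose proof (dfac_tri X o p q Ho Hp Hq). lra.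
  - apply Hb in Bp. apply (gt_ball X o p r Ho Hp) in Bp.
    exists (dfac o p - r). split; [lra|]. intros q Hq Hpq.
    apply Hb. apply (gt_ball X o q r Ho Hq).
    pose proof (dfac_tri X o q p Ho Hq Hp). rewrite (dfac_sym X q p) in H. lra.
Qed.

Lemma basic_inf (X:EMS) (B:X->Prop) p: basic_open B -> B p -> Om X p = true ->
  exists o r, Om X o = false /\ forall q, Om X q = false -> r < dfac o q -> B q.
Proof.
  intros [o [r [Ho [Hb|Hb]]]] Bp Hp.
  - apply Hb in Bp. exfalso; apply (inf_ball1 X o p r Ho Hp Bp).
  - exists o, r. split; auto. intros q Hq H. apply Hb. apply (gt_ball X o q r Ho Hq); auto.
Qed.

Lemma basic_ems (X:EMS) (B:X->Prop): basic_open B -> ems_open B.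
Proof. intros HB p Bp. exists B. auto. Qed.

Lemma mk_ball (X:EMS) (o:X) r: Om X o = false -> basic_open (fun q => Rbar_lt (d X o q) (Finite r)).
Proof. intros Ho. exists o, r. split; auto. left; tauto. Qed.
Lemma mk_aball (X:EMS) (o:X) r: Om X o = false -> basic_open (fun q => Rbar_lt (Finite r) (d X o q)).
Proof. intros Ho. exists o, r. split; auto. right; tauto. Qed.

Definition DD {X:EMS} (c p q : X) : R := dfac p q / (dfac p c * dfac q c).

Lemma DD_sym (X:EMS) (c p q:X): DD c p q = DD c q p.
Proof. unfold DD. rewrite dfac_sym. f_equal. ring. Qed.
Lemma DD_refl (X:EMS) (c p:X): DD c p p = 0.
Proof. unfold DD. rewrite dfac_refl. unfold Rdiv. ring. Qed.
Lemma DD_pos (X:EMS) (c p q:X): p <> q -> p <> c -> q <> c -> 0 < DD c p q.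
Proof.
  intros. unfold DD. apply Rdiv_lt_0_compat. apply dfac_pos; auto.
  apply Rmult_lt_0_compat; apply dfac_pos; auto.
Qed.
Lemma DD_nonneg (X:EMS) (c p q:X): p <> c -> q <> c -> 0 <= DD c p q.
Proof.
  intros. destruct (classic (p = q)) as [->|]. rewrite DD_refl; lra. left; apply DD_pos; auto.
Qed.

Lemma div_lt_l a b e: 0 < b -> a < e * b -> a / b < e.
Proof. intros Hb H. apply (Rmult_lt_reg_r b); auto. unfold Rdiv. rewrite Rmult_assoc, Rinv_l; lra. Qed.
Lemma div_gt_l a b e: 0 < b -> e * b < a -> e < a / b.
Proof. intros Hb H. apply (Rmult_lt_reg_r b); auto. unfold Rdiv. rewrite Rmult_assoc, Rinv_l; lra. Qed.
Lemma div_lt_inv a b e: 0 < b -> a / b < e -> a < e * b.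
Proof. intros Hb H. replace a with (a / b * b) by (field; lra). apply Rmult_lt_compat_r; auto. Qed.
Lemma div_gt_inv a b e: 0 < b -> e < a / b -> e * b < a.
Proof. intros Hb H. replace a with (a / b * b) by (field; lra). apply Rmult_lt_compat_r; auto. Qed.

Lemma inf_uniq (X:EMS) (a b:X): Om X a = true -> Om X b = true -> a = b.
Proof. apply Om_atmost1. Qed.

Lemma est1 (X:EMS) (c p:X) eps: p <> c -> 0 < eps ->
  exists B, basic_open B /\ B p /\ forall q, B q -> q <> c /\ DD c p q < eps.
Proof.
  intros Hpc He. destruct (Om X p) eqn:Hp.
  - destruct (Om X c) eqn:Hc. { exfalso; apply Hpc; apply inf_uniq; auto. }
    exists (fun q => Rbar_lt (Finite (1/eps)) (d X c q)). split; [apply mk_aball; auto|].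
    split; [apply inf_ball2; auto|]. intros q Bq.
    destruct (Om X q) eqn:Hq.
    + assert (q = p) by (apply inf_uniq; auto). subst q. split; auto. rewrite DD_refl; lra.
    + apply (gt_ball X c q _ Hc Hq) in Bq.
      assert (0 < 1/eps) by (apply Rdiv_lt_0_compat; lra).
      assert (q <> c). { intro; subst. rewrite dfac_refl in Bq. lra. }
      split; auto. unfold DD. rewrite (dfac_tf X p q Hp Hq), (dfac_tf X p c Hp Hc).
      rewrite (dfac_sym X q c). apply div_lt_l. nra.
      apply (Rmult_lt_compat_r eps) in Bq; [|lra].
      replace (1/eps*eps) with 1 in Bq by (field; lra). nra.
  - destruct (Om X c) eqn:Hc.
    + exists (fun q => Rbar_lt (d X p q) (Finite eps)). split; [apply mk_ball; auto|].
      split. { apply (lt_ball X p p _ Hp Hp). rewrite dfac_refl; lra. }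
      intros q Bq. destruct (Om X q) eqn:Hq. { exfalso; apply (inf_ball1 X p q eps Hp Hq Bq). }
      apply (lt_ball X p q _ Hp Hq) in Bq. split. { intro E; rewrite E in Hq; congruence. }
      unfold DD. rewrite (dfac_ft X p c Hp Hc), (dfac_ft X q c Hq Hc).
      apply div_lt_l; lra.
    + set (m := dfac p c). assert (Hm: 0 < m) by (apply dfac_pos; auto).
      set (del := Rmin (m/2) (eps*m*m/2)).
      assert (Hd1: del <= m/2) by apply Rmin_l. assert (Hd2: del <= eps*m*m/2) by apply Rmin_r.
      assert (Hemm: 0 < eps*m*m) by (repeat apply Rmult_lt_0_compat; lra).
      assert (Hd0: 0 < del). { unfold del. apply Rmin_glb_lt; lra. }
      exists (fun q => Rbar_lt (d X p q) (Finite del)). split; [apply mk_ball; auto|].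
      split. { apply (lt_ball X p p _ Hp Hp). rewrite dfac_refl; lra. }
      intros q Bq. destruct (Om X q) eqn:Hq. { exfalso; apply (inf_ball1 X p q del Hp Hq Bq). }
      apply (lt_ball X p q _ Hp Hq) in Bq.
      pose proof (dfac_tri X p q c Hp Hq Hc) as Ht. fold m in Ht.
      assert (Hqc: m/2 < dfac q c) by lra.
      split. { intro; subst. rewrite dfac_refl in Hqc. lra. }
      unfold DD. fold m. apply div_lt_l. nra.
      pose proof (dfac_nonneg X p q). nra.
Qed.

Lemma est2 (X:EMS) (c a:X) M: a <> c ->
  exists B, basic_open B /\ B c /\ forall q, B q -> q <> c -> M < DD c a q.
Proof.
  intros Hac. destruct (Om X c) eqn:Hc.
  - destruct (Om X a) eqn:Ha. { exfalso; apply Hac; apply inf_uniq; auto. }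
    exists (fun q => Rbar_lt (Finite (Rabs M)) (d X a q)). split; [apply mk_aball; auto|].
    split; [apply inf_ball2; auto|]. intros q Bq Hqc.
    destruct (Om X q) eqn:Hq. { exfalso; apply Hqc; apply inf_uniq; auto. }
    apply (gt_ball X a q _ Ha Hq) in Bq. unfold DD.
    rewrite (dfac_ft X a c Ha Hc), (dfac_ft X q c Hq Hc).
    apply div_gt_l; [lra|]. pose proof (Rle_abs M). lra.
  - destruct (Om X a) eqn:Ha.
    + set (del := 1/(Rabs M + 1)). assert (Hd: 0 < del) by (unfold del; apply Rdiv_lt_0_compat; pose proof (Rabs_pos M); lra).
      assert (Hd': (Rabs M) * del < 1). { unfold del. apply (Rmult_lt_reg_r (Rabs M + 1)). pose proof (Rabs_pos M); lra. field_simplify; pose proof (Rabs_pos M); lra. }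
      exists (fun q => Rbar_lt (d X c q) (Finite del)). split; [apply mk_ball; auto|].
      split. { apply (lt_ball X c c _ Hc Hc). rewrite dfac_refl; lra. }
      intros q Bq Hqc. destruct (Om X q) eqn:Hq. { exfalso; apply (inf_ball1 X c q del Hc Hq Bq). }
      apply (lt_ball X c q _ Hc Hq) in Bq.
      assert (Hp: 0 < dfac q c) by (apply dfac_pos; auto). rewrite dfac_sym in Bq.
      unfold DD. rewrite (dfac_tf X a q Ha Hq), (dfac_tf X a c Ha Hc).
      apply div_gt_l; [lra|]. pose proof (Rle_abs M). pose proof (Rabs_pos M). nra.
    + set (m := dfac a c). assert (Hm: 0 < m) by (apply dfac_pos; auto).
      set (del := Rmin (m/2) (1/(2*(Rabs M + 1)))).
      assert (Hd1: del <= m/2) by apply Rmin_l. assert (Hd2: del <= 1/(2*(Rabs M + 1))) by apply Rmin_r.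
      pose proof (Rabs_pos M) as HM0.
      assert (Hd0: 0 < del). { unfold del. apply Rmin_glb_lt. lra. apply Rdiv_lt_0_compat; lra. }
      assert (Hd3: Rabs M * del < 1/2).
      { assert (del * (2*(Rabs M + 1)) <= 1).
        { replace 1 with (1/(2*(Rabs M + 1)) * (2*(Rabs M + 1))) at 2 by (field; lra).
          apply Rmult_le_compat_r; lra. }
        nra. }
      exists (fun q => Rbar_lt (d X c q) (Finite del)). split; [apply mk_ball; auto|].
      split. { apply (lt_ball X c c _ Hc Hc). rewrite dfac_refl; lra. }
      intros q Bq Hqc. destruct (Om X q) eqn:Hq. { exfalso; apply (inf_ball1 X c q del Hc Hq Bq). }
      apply (lt_ball X c q _ Hc Hq) in Bq.
      assert (Hp: 0 < dfac q c) by (apply dfac_pos; auto). rewrite dfac_sym in Bq.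
      pose proof (dfac_tri X a q c Ha Hq Hc) as Ht. fold m in Ht.
      unfold DD. fold m. apply div_gt_l; [nra|].
      pose proof (Rle_abs M). 
      assert (M * (m * dfac q c) <= Rabs M * (m * dfac q c)) by (apply Rmult_le_compat_r; nra).
      assert (Rabs M * dfac q c <= Rabs M * del) by (apply Rmult_le_compat_l; lra).
      nra.
Qed.

Lemma est3 (X:EMS) (c p:X) (B:X->Prop): p <> c -> basic_open B -> B p ->
  exists eps, 0 < eps /\ forall q, q <> c -> DD c p q < eps -> B q.
Proof.
  intros Hpc HB Bp. destruct (Om X p) eqn:Hp.
  - destruct (Om X c) eqn:Hc. { exfalso; apply Hpc; apply inf_uniq; auto. }
    destruct (basic_inf X B p HB Bp Hp) as [o [r [Ho HBo]]].
    set (N := Rabs r + dfac o c + 1).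
    assert (HN: 0 < N) by (unfold N; pose proof (Rabs_pos r); pose proof (dfac_nonneg X o c); lra).
    exists (1/N). split; [apply Rdiv_lt_0_compat; lra|]. intros q Hqc Hd.
    destruct (Om X q) eqn:Hq. { assert (q = p) by (apply inf_uniq; auto). subst; auto. }
    apply HBo; auto. unfold DD in Hd.
    rewrite (dfac_tf X p q Hp Hq), (dfac_tf X p c Hp Hc) in Hd.
    assert (Hqc': 0 < dfac q c) by (apply dfac_pos; auto).
    apply div_lt_inv in Hd; [|lra].
    assert (N < dfac q c).
    { apply (Rmult_lt_compat_r N) in Hd; [|lra].
      replace (1/N*(1*dfac q c)*N) with (dfac q c) in Hd by (field; lra). lra. }
    pose proof (dfac_tri X c o q Hc Ho Hq). rewrite (dfac_sym X c q), (dfac_sym X c o) in H0.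
    pose proof (Rle_abs r). unfold N in H. lra.
  - destruct (basic_fin X B p HB Bp Hp) as [del [Hdel HBd]].
    destruct (Om X c) eqn:Hc.
    + exists del. split; auto. intros q Hqc Hd.
      destruct (Om X q) eqn:Hq. { exfalso; apply Hqc; apply inf_uniq; auto. }
      apply HBd; auto. unfold DD in Hd.
      rewrite (dfac_ft X p c Hp Hc), (dfac_ft X q c Hq Hc) in Hd. lra.
    + set (m := dfac p c). assert (Hm: 0 < m) by (apply dfac_pos; auto).
      set (eps := Rmin (1/(2*m)) (del/(2*m*m))).
      assert (He1: eps <= 1/(2*m)) by apply Rmin_l. assert (He2: eps <= del/(2*m*m)) by apply Rmin_r.
      assert (He0: 0 < eps). { unfold eps. apply Rmin_glb_lt; apply Rdiv_lt_0_compat; try lra.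
         repeat apply Rmult_lt_0_compat; lra. }
      assert (He1': eps * m <= 1/2).
      { replace (1/2) with (1/(2*m) * m) by (field; lra). apply Rmult_le_compat_r; lra. }
      assert (He2': eps * (2*m*m) <= del).
      { replace del with (del/(2*m*m) * (2*m*m)) by (field; lra). apply Rmult_le_compat_r; [|lra].
        left; repeat apply Rmult_lt_0_compat; lra. }
      exists eps. split; auto. intros q Hqc Hd.
      assert (Hqc': 0 < dfac q c) by (apply dfac_pos; auto).
      unfold DD in Hd. fold m in Hd. apply div_lt_inv in Hd; [|nra].
      destruct (Om X q) eqn:Hq.
      * exfalso. rewrite (dfac_ft X p q Hp Hq), (dfac_tf X q c Hq Hc) in Hd. nra.
      * apply HBd; auto.
        pose proof (dfac_tri X q p c Hq Hp Hc) as Ht. fold m in Ht. rewrite (dfac_sym X q p) in Ht.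
        pose proof (dfac_nonneg X p q).
        assert (eps * m * dfac q c <= eps * m * (dfac p q + m)) by (apply Rmult_le_compat_l; nra).
        assert (eps * m * dfac p q <= 1/2 * dfac p q) by (apply Rmult_le_compat_r; lra).
        nra.
Qed.

Lemma est4 (X:EMS) (c a:X) (B:X->Prop): a <> c -> basic_open B -> B c ->
  exists M, forall q, q <> c -> M < DD c a q -> B q.
Proof.
  intros Hac HB Bc. destruct (Om X c) eqn:Hc.
  - destruct (Om X a) eqn:Ha. { exfalso; apply Hac; apply inf_uniq; auto. }
    destruct (basic_inf X B c HB Bc Hc) as [o [r [Ho HBo]]].
    exists (Rabs r + dfac o a). intros q Hqc Hd.
    destruct (Om X q) eqn:Hq. { exfalso; apply Hqc; apply inf_uniq; auto. }
    apply HBo; auto. unfold DD in Hd.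
    rewrite (dfac_ft X a c Ha Hc), (dfac_ft X q c Hq Hc) in Hd.
    replace (dfac a q / (1*1)) with (dfac a q) in Hd by field.
    pose proof (dfac_tri X a o q Ha Ho Hq). rewrite (dfac_sym X a o) in H.
    pose proof (Rle_abs r). lra.
  - destruct (basic_fin X B c HB Bc Hc) as [del [Hdel HBd]].
    destruct (Om X a) eqn:Ha.
    + exists (1/del). intros q Hqc Hd.
      destruct (Om X q) eqn:Hq.
      { assert (q = a) by (apply inf_uniq; auto). subst. rewrite DD_refl in Hd.
        assert (0 < 1/del) by (apply Rdiv_lt_0_compat; lra). lra. }
      apply HBd; auto. rewrite dfac_sym.
      assert (Hqc': 0 < dfac q c) by (apply dfac_pos; auto).
      unfold DD in Hd. rewrite (dfac_tf X a q Ha Hq), (dfac_tf X a c Ha Hc) in Hd.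
      apply div_gt_inv in Hd; [|lra].
      apply (Rmult_lt_compat_r del) in Hd; [|lra].
      replace (1/del*(1*dfac q c)*del) with (dfac q c) in Hd by (field; lra). lra.
    + set (m := dfac a c). assert (Hm: 0 < m) by (apply dfac_pos; auto).
      exists ((2 + m/del)/m). intros q Hqc Hd.
      assert (Hqc': 0 < dfac q c) by (apply dfac_pos; auto).
      unfold DD in Hd. fold m in Hd. apply div_gt_inv in Hd; [|nra].
      replace ((2 + m/del)/m * (m * dfac q c)) with ((2 + m/del) * dfac q c) in Hd by (field; lra).
      destruct (Om X q) eqn:Hq.
      * exfalso. rewrite (dfac_ft X a q Ha Hq), (dfac_tf X q c Hq Hc) in Hd.
        assert (0 < m/del) by (apply Rdiv_lt_0_compat; lra). lra.
      * apply HBd; auto. rewrite dfac_sym.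
        pose proof (dfac_tri X a c q Ha Hc Hq) as Ht. fold m in Ht. rewrite (dfac_sym X c q) in Ht.
        set (K := 1 + m/del).
        assert (HK: K * del = del + m) by (unfold K; field; lra).
        assert (dfac q c * K < m) by (unfold K; lra).
        nra.
Qed.

Definition Xs t := 2*t/(t*t+1).
Definition Ys t := (t*t-1)/(t*t+1).
Definition Pm (al be t:R) : R*R := (be * Xs t + al * Ys t, - al * Xs t + be * Ys t).
Definition invP (al be:R) (p:R*R) := (be*fst p - al*snd p) / (1 - (al*fst p + be*snd p)).
Definition Lf (al be:R) (q p : R*R) := (fst q - al)*(snd p - be) - (snd q - be)*(fst p - al).

Lemma den_pos t: 0 < t*t+1.
Proof. nra. Qed.

Lemma XY1 t: Xs t ^2 + Ys t ^2 = 1.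
Proof. unfold Xs, Ys. pose proof (den_pos t). field. lra. Qed.

Lemma Pm_S1 al be t: al^2+be^2 = 1 -> S1 (Pm al be t).
Proof.
  intros H. unfold S1, Pm; cbn [fst snd].
  transitivity ((al^2+be^2)*(Xs t ^2 + Ys t ^2)); [ring|]. rewrite H, XY1. ring.
Qed.

Lemma Pm_ne al be t: al^2+be^2 = 1 -> Pm al be t <> (al, be).
Proof.
  intros H E. unfold Pm in E. injection E as e1 e2.
  assert (Ys t = 1).
  { transitivity (al*(be * Xs t + al * Ys t) + be*(- al * Xs t + be * Ys t) - (al^2+be^2-1)*Ys t); [ring|].
    rewrite e1, e2, H. lra. }
  unfold Ys in H0. pose proof (den_pos t).
  apply (f_equal (fun x => x * (t*t+1))) in H0. field_simplify in H0; lra.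
Qed.

Lemma invP_Pm al be t: al^2+be^2 = 1 -> invP al be (Pm al be t) = t.
Proof.
  intros H. unfold invP, Pm; cbn [fst snd].
  replace (be * (be * Xs t + al * Ys t) - al * (- al * Xs t + be * Ys t)) with ((al^2+be^2)*Xs t) by ring.
  replace (al * (be * Xs t + al * Ys t) + be * (- al * Xs t + be * Ys t)) with ((al^2+be^2)*Ys t) by ring.
  rewrite H. unfold Xs, Ys. pose proof (den_pos t). field. split; lra.
Qed.

Lemma Pm_invP al be p: al^2+be^2 = 1 -> S1 p -> p <> (al,be) -> Pm al be (invP al be p) = p.
Proof.
  intros H Hp Hne. destruct p as [u v]. unfold S1 in Hp; cbn [fst snd] in Hp. unfold invP; cbn [fst snd].
  set (x := be*u - al*v). set (y := al*u + be*v).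
  assert (Hxy: x*x + y*y = 1). { unfold x, y. transitivity ((al^2+be^2)*(u^2+v^2)); [ring|]. rewrite H, Hp; ring. }
  assert (Hu: u = be*x + al*y). { unfold x, y. transitivity ((al^2+be^2)*u); [rewrite H; ring|ring]. }
  assert (Hv: v = - al*x + be*y). { unfold x, y. transitivity ((al^2+be^2)*v); [rewrite H; ring|ring]. }
  assert (Hy: y <> 1).
  { intro Ey. assert (x = 0) by nra. apply Hne. rewrite Hu, Hv, Ey, H0. f_equal; ring. }
  assert (Hy': 1 - y <> 0) by lra.
  set (t := x / (1-y)).
  assert (Ht: t*t+1 = 2/(1-y)).
  { unfold t. replace (x/(1-y)*(x/(1-y))+1) with ((x*x+(1-y)*(1-y))/((1-y)*(1-y))) by (field; auto).
    replace (x*x) with (1-y*y) by lra. field; auto. }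
  assert (HX: Xs t = x). { unfold Xs. rewrite Ht. unfold t. field. auto. }
  assert (HY: Ys t = y). { unfold Ys. rewrite Ht. replace (t*t-1) with ((t*t+1)-2) by ring. rewrite Ht. field. auto. }
  unfold Pm. rewrite HX, HY. f_equal; lra.
Qed.

Lemma dist_Pm al be t t0: al^2+be^2 = 1 ->
  (fst (Pm al be t) - fst (Pm al be t0))^2 + (snd (Pm al be t) - snd (Pm al be t0))^2 <= 4*(t-t0)^2.
Proof.
  intros H. unfold Pm; cbn [fst snd].
  replace ((be * Xs t + al * Ys t - (be * Xs t0 + al * Ys t0)) ^ 2 +
    (- al * Xs t + be * Ys t - (- al * Xs t0 + be * Ys t0)) ^ 2)
  with ((al^2+be^2)*((Xs t - Xs t0)^2 + (Ys t - Ys t0)^2)) by ring.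
  rewrite H. pose proof (den_pos t). pose proof (den_pos t0).
  replace ((Xs t - Xs t0)^2 + (Ys t - Ys t0)^2) with (4*(t-t0)^2 / ((t*t+1)*(t0*t0+1)))
    by (unfold Xs, Ys; field; lra).
  rewrite Rmult_1_l. unfold Rdiv.
  assert (0 <= 4*(t-t0)^2) by (pose proof (pow2_ge_0 (t-t0)); lra).
  assert (/((t*t+1)*(t0*t0+1)) <= 1).
  { rewrite <- Rinv_1. apply Rinv_le_contravar; [lra|]. nra. }
  assert (0 < /((t*t+1)*(t0*t0+1))) by (apply Rinv_0_lt_compat; nra).
  nra.
Qed.

Lemma dist_pole al be t: al^2+be^2 = 1 ->
  (fst (Pm al be t) - al)^2 + (snd (Pm al be t) - be)^2 = 4/(t*t+1).
Proof.
  intros H. unfold Pm; cbn [fst snd].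
  replace ((be * Xs t + al * Ys t - al) ^ 2 + (- al * Xs t + be * Ys t - be) ^ 2)
  with ((al^2+be^2)*(Xs t ^2 + (Ys t - 1)^2)) by ring.
  rewrite H. unfold Xs, Ys. pose proof (den_pos t). field. lra.
Qed.

Lemma L_Pm al be t2 t: al^2+be^2 = 1 ->
  Lf al be (Pm al be t2) (Pm al be t) = 4*(t-t2)/((t2*t2+1)*(t*t+1)).
Proof.
  intros H. unfold Lf, Pm; cbn [fst snd].
  replace ((be * Xs t2 + al * Ys t2 - al) * (- al * Xs t + be * Ys t - be) -
     (- al * Xs t2 + be * Ys t2 - be) * (be * Xs t + al * Ys t - al))
  with ((al^2+be^2)*(Xs t2 * (Ys t - 1) - (Ys t2 - 1)*Xs t)) by ring.
  rewrite H. unfold Xs, Ys. pose proof (den_pos t). pose proof (den_pos t2). field. lra.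
Qed.

Lemma sq_abs x e: 0 < e -> x^2 < e^2 -> Rabs x < e.
Proof. intros He H. unfold Rabs. destruct (Rcase_abs x); nra. Qed.

Lemma lin_open (g : R*R -> R) (A B:R):
  (forall p q, g q - g p = A*(fst q - fst p) + B*(snd q - snd p)) -> R2_open (fun p => 0 < g p).
Proof.
  intros Hg p Hp. pose proof (Rabs_pos A). pose proof (Rabs_pos B).
  set (e := g p / (Rabs A + Rabs B + 1)).
  assert (He: 0 < e) by (apply Rdiv_lt_0_compat; lra).
  exists e. split; auto. intros q Hq.
  assert (H1: Rabs (fst q - fst p) < e) by (apply sq_abs; auto; pose proof (pow2_ge_0 (snd q - snd p)); lra).
  assert (H2: Rabs (snd q - snd p) < e) by (apply sq_abs; auto; pose proof (pow2_ge_0 (fst q - fst p)); lra).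
  assert (HA: - (Rabs A * e) <= A*(fst q - fst p)).
  { pose proof (Rabs_mult A (fst q - fst p)). pose proof (Rabs_pos (fst q - fst p)).
    assert (Rabs A * Rabs (fst q - fst p) <= Rabs A * e) by (apply Rmult_le_compat_l; lra).
    pose proof (Rle_abs (- (A*(fst q - fst p)))) as Hz. rewrite Rabs_Ropp in Hz. lra. }
  assert (HB: - (Rabs B * e) <= B*(snd q - snd p)).
  { pose proof (Rabs_mult B (snd q - snd p)). pose proof (Rabs_pos (snd q - snd p)).
    assert (Rabs B * Rabs (snd q - snd p) <= Rabs B * e) by (apply Rmult_le_compat_l; lra).
    pose proof (Rle_abs (- (B*(snd q - snd p)))) as Hz. rewrite Rabs_Ropp in Hz. lra. }
  assert (Hge: g p = e * (Rabs A + Rabs B + 1)) by (unfold e; field; lra).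
  specialize (Hg p q). nra.
Qed.

Lemma L_open_pos al be q: R2_open (fun p => 0 < Lf al be q p).
Proof.
  apply (lin_open _ (-(snd q - be)) (fst q - al)). intros. unfold Lf. ring.
Qed.
Lemma L_open_neg al be q: R2_open (fun p => 0 < - Lf al be q p).
Proof.
  apply (lin_open _ (snd q - be) (-(fst q - al))). intros. unfold Lf. ring.
Qed.

Definition Tc {X:EMS} (g : X -> R*R) (c p : X) := invP (fst (g c)) (snd (g c)) (g p).

Lemma gc_S1 (X:EMS) (C:X->Prop) f g c: homeo_on R2_open ems_open S1 C f g -> C c ->
  (fst (g c))^2 + (snd (g c))^2 = 1.
Proof. intros [Hf [Hg _]] Cc. apply Hg; auto. Qed.

Lemma g_ne (X:EMS) (C:X->Prop) f g c p: homeo_on R2_open ems_open S1 C f g -> C c -> C p -> p <> c ->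
  g p <> (fst (g c), snd (g c)).
Proof.
  intros [Hf [Hg [Hgf [Hfg _]]]] Cc Cp Hpc E. rewrite <- surjective_pairing in E.
  apply Hpc. rewrite <- (Hfg p Cp), <- (Hfg c Cc), E. auto.
Qed.

Lemma gT (X:EMS) (C:X->Prop) f g c p: homeo_on R2_open ems_open S1 C f g -> C c -> C p -> p <> c ->
  Pm (fst (g c)) (snd (g c)) (Tc g c p) = g p.
Proof.
  intros Hh Cc Cp Hpc. unfold Tc. apply Pm_invP.
  apply (gc_S1 X C f g c Hh Cc). destruct Hh as [_ [Hg _]]; auto.
  apply (g_ne X C f g c p Hh Cc Cp Hpc).
Qed.

Lemma T_inj (X:EMS) (C:X->Prop) f g c p q: homeo_on R2_open ems_open S1 C f g -> C c -> C p -> C q ->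
  p <> c -> q <> c -> Tc g c p = Tc g c q -> p = q.
Proof.
  intros Hh Cc Cp Cq Hp Hq E.
  pose proof (gT X C f g c p Hh Cc Cp Hp) as e1. pose proof (gT X C f g c q Hh Cc Cq Hq) as e2.
  rewrite E in e1. rewrite e1 in e2.
  destruct Hh as [Hf [Hg [Hgf [Hfg _]]]].
  rewrite <- (Hfg p Cp), <- (Hfg q Cq), e2. auto.
Qed.

Lemma fPm (X:EMS) (C:X->Prop) f g c t: homeo_on R2_open ems_open S1 C f g -> C c ->
  C (f (Pm (fst (g c)) (snd (g c)) t)) /\ f (Pm (fst (g c)) (snd (g c)) t) <> c /\
  Tc g c (f (Pm (fst (g c)) (snd (g c)) t)) = t.
Proof.
  intros Hh Cc. pose proof (gc_S1 X C f g c Hh Cc) as H1.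
  pose proof (Pm_S1 _ _ t H1) as HS.
  destruct Hh as [Hf [Hg [Hgf [Hfg _]]]].
  split; [apply Hf; auto|]. split.
  - intro E. apply (Pm_ne _ _ t H1). rewrite <- (Hgf _ HS), E. apply surjective_pairing.
  - unfold Tc. rewrite (Hgf _ HS). apply invP_Pm; auto.
Qed.

Lemma frac_sign a b: 0 < b -> (0 < a <-> 0 < a / b).
Proof.
  intros Hb. split; intro H.
  - apply Rdiv_lt_0_compat; auto.
  - destruct (Rle_or_lt a 0); auto. exfalso.
    assert (a / b <= 0). { unfold Rdiv. assert (0 < /b) by (apply Rinv_0_lt_compat; auto). nra. } lra.
Qed.

Lemma Lsign (X:EMS) (C:X->Prop) f g c q z: homeo_on R2_open ems_open S1 C f g -> C c -> C q -> C z ->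
  q <> c -> z <> c ->
  ((Tc g c q < Tc g c z -> 0 < Lf (fst (g c)) (snd (g c)) (g q) (g z)) /\
   (Tc g c z < Tc g c q -> 0 < - Lf (fst (g c)) (snd (g c)) (g q) (g z))).
Proof.
  intros Hh Cc Cq Cz Hq Hz.
  rewrite <- (gT X C f g c q Hh Cc Cq Hq), <- (gT X C f g c z Hh Cc Cz Hz).
  rewrite L_Pm by (apply (gc_S1 X C f g c Hh Cc)).
  set (tq := Tc g c q). set (tz := Tc g c z).
  pose proof (den_pos tq). pose proof (den_pos tz).
  assert (0 < (tq*tq+1)*(tz*tz+1)) by nra.
  split; intro Hlt.
  - apply frac_sign; auto. lra.
  - replace (- (4 * (tz - tq) / ((tq * tq + 1) * (tz * tz + 1)))) with (4 * (tq - tz) / ((tq * tq + 1) * (tz * tz + 1))) by (field; lra).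
    apply frac_sign; auto. lra.
Qed.

Lemma sep (X:EMS) (C:X->Prop) f g c p q r: homeo_on R2_open ems_open S1 C f g -> C c ->
  C p -> C q -> C r -> p <> c -> q <> c -> r <> c ->
  Tc g c p < Tc g c q -> Tc g c q < Tc g c r ->
  ~ same_component (fun z => C z /\ z <> c /\ z <> q) p r.
Proof.
  intros Hh Cc Cp Cq Cr Hp Hq Hr H1 H2 [A [HA [Hcon [Ap Ar]]]].
  pose proof Hh as Hh'. destruct Hh' as [_ [_ [_ [_ [_ Ho2]]]]].
  destruct (Ho2 _ (L_open_pos (fst (g c)) (snd (g c)) (g q))) as [V1 [HV1 E1]].
  destruct (Ho2 _ (L_open_neg (fst (g c)) (snd (g c)) (g q))) as [V2 [HV2 E2]].
  apply Hcon. exists V1, V2. split; auto. split; auto. split; [|split; [|split]].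
  - intros z Az. destruct (HA z Az) as [Cz [Hzc Hzq]].
    destruct (Lsign X C f g c q z Hh Cc Cq Cz Hq Hzc) as [L1 L2].
    destruct (total_order_T (Tc g c z) (Tc g c q)) as [[h|h]|h].
    + right. apply E2; auto.
    + exfalso. apply Hzq. apply (T_inj X C f g c z q Hh Cc Cz Cq Hzc Hq h).
    + left. apply E1; auto.
  - exists r. split; auto. apply E1; auto.
    destruct (Lsign X C f g c q r Hh Cc Cq Cr Hq Hr) as [L1 L2]. auto.
  - exists p. split; auto. apply E2; auto.
    destruct (Lsign X C f g c q p Hh Cc Cq Cp Hq Hp) as [L1 L2]. auto.
  - intros z Az h1 h2. destruct (HA z Az) as [Cz _].
    apply E1 in h1; auto. apply E2 in h2; auto. lra.
Qed.

Lemma addit (X:EMS) (C:X->Prop) f g c p q r: is_circle X C -> homeo_on R2_open ems_open S1 C f g -> C c ->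
  C p -> C q -> C r -> p <> c -> q <> c -> r <> c ->
  Tc g c p < Tc g c q -> Tc g c q < Tc g c r ->
  DD c p r = DD c p q + DD c q r.
Proof.
  intros [_ Hcirc] Hh Cc Cp Cq Cr Hp Hq Hr H1 H2.
  assert (pq: p <> q) by (intro E; subst; lra).
  assert (qr: q <> r) by (intro E; subst; lra).
  assert (pr: p <> r) by (intro E; subst; lra).
  pose proof (Hcirc c p q r Cc Cp Cq Cr (not_eq_sym Hp) (not_eq_sym Hq) (not_eq_sym Hr) pq pr qr
     (sep X C f g c p q r Hh Cc Cp Cq Cr Hp Hq Hr H1 H2)) as E.
  rewrite (dfac_sym X c q), (dfac_sym X c p), (dfac_sym X c r) in E.
  unfold DD.
  assert (0 < dfac p c) by (apply dfac_pos; auto).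
  assert (0 < dfac q c) by (apply dfac_pos; auto).
  assert (0 < dfac r c) by (apply dfac_pos; auto).
  assert (Hpr: dfac p r = (dfac p c * dfac q r + dfac r c * dfac p q) / dfac q c).
  { apply (Rmult_eq_reg_r (dfac q c)); [|lra]. unfold Rdiv. rewrite Rmult_assoc, Rinv_l by lra. lra. }
  rewrite Hpr. field. lra.
Qed.

Definition Fc {X:EMS} (g : X -> R*R) (c a p : X) :=
  if Rlt_dec (Tc g c a) (Tc g c p) then DD c a p else - DD c a p.

Lemma F_a (X:EMS) (g : X -> R*R) c a: Fc g c a a = 0.
Proof. unfold Fc. destruct (Rlt_dec _ _); [lra|]. rewrite DD_refl; lra. Qed.

Lemma Gdiff (X:EMS) (C:X->Prop) f g c a p q: is_circle X C -> homeo_on R2_open ems_open S1 C f g -> C c ->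
  C a -> C p -> C q -> a <> c -> p <> c -> q <> c -> Tc g c p < Tc g c q ->
  Fc g c a q - Fc g c a p = DD c p q.
Proof.
  intros Hc Hh Cc Ca Cp Cq Ha Hp Hq H.
  pose proof (fun x y z => addit X C f g c x y z Hc Hh Cc) as Ad.
  unfold Fc.
  destruct (total_order_T (Tc g c a) (Tc g c p)) as [[h|h]|h].
  - rewrite (Ad a p q) by (auto; lra).
    destruct (Rlt_dec _ (Tc g c q)); [|lra]. destruct (Rlt_dec _ (Tc g c p)); [|lra]. lra.
  - assert (a = p) by (apply (T_inj X C f g c a p); auto). subst p.
    destruct (Rlt_dec _ (Tc g c q)); [|lra]. destruct (Rlt_dec _ (Tc g c a)); [lra|].
    rewrite DD_refl. lra.
  - destruct (Rlt_dec _ (Tc g c p)); [lra|].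
    destruct (total_order_T (Tc g c a) (Tc g c q)) as [[h2|h2]|h2].
    + destruct (Rlt_dec _ (Tc g c q)); [|lra].
      rewrite (Ad p a q) by (auto; lra). rewrite (DD_sym X c p a). lra.
    + assert (a = q) by (apply (T_inj X C f g c a q); auto). subst q.
      destruct (Rlt_dec _ (Tc g c a)); [lra|]. rewrite DD_refl, DD_sym. lra.
    + destruct (Rlt_dec _ (Tc g c q)); [lra|].
      rewrite (DD_sym X c a p), (DD_sym X c a q).
      rewrite (Ad p q a) by (auto; lra). lra.
Qed.

Lemma Fkey (X:EMS) (C:X->Prop) f g c a p q: is_circle X C -> homeo_on R2_open ems_open S1 C f g -> C c ->
  C a -> C p -> C q -> a <> c -> p <> c -> q <> c ->
  DD c p q = Rabs (Fc g c a p - Fc g c a q).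
Proof.
  intros Hc Hh Cc Ca Cp Cq Ha Hp Hq.
  destruct (total_order_T (Tc g c p) (Tc g c q)) as [[h|h]|h].
  - rewrite <- (Gdiff X C f g c a p q) by auto. rewrite Rabs_minus_sym.
    rewrite Rabs_right; auto. rewrite (Gdiff X C f g c a p q) by auto. apply Rle_ge, DD_nonneg; auto.
  - assert (p = q) by (apply (T_inj X C f g c p q); auto). subst. rewrite DD_refl.
    replace (Fc g c a q - Fc g c a q) with 0 by ring. rewrite Rabs_R0; auto.
  - rewrite DD_sym. rewrite <- (Gdiff X C f g c a q p) by auto.
    rewrite Rabs_right; auto. rewrite (Gdiff X C f g c a q p) by auto. apply Rle_ge, DD_nonneg; auto.
Qed.

Lemma h_cont (X:EMS) (C:X->Prop) f g c a: is_circle X C -> homeo_on R2_open ems_open S1 C f g -> C c ->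
  C a -> a <> c ->
  continuity (fun t => Fc g c a (f (Pm (fst (g c)) (snd (g c)) t))).
Proof.
  intros Hc Hh Cc Ca Ha t0. unfold continuity_pt, continue_in, limit1_in, limit_in.
  intros eps Heps. simpl. unfold R_dist.
  set (al := fst (g c)) in *. set (be := snd (g c)) in *.
  assert (H1: al^2+be^2 = 1) by (apply (gc_S1 X C f g c Hh Cc)).
  destruct (fPm X C f g c t0 Hh Cc) as [Cp0 [Hp0 _]]. fold al be in Cp0, Hp0.
  set (p0 := f (Pm al be t0)) in *.
  destruct (est1 X c p0 eps Hp0 Heps) as [B [HB [Bp0 HBq]]].
  pose proof Hh as Hh'. destruct Hh' as [_ [_ [_ [_ [Ho1 _]]]]].
  destruct (Ho1 B (basic_ems X B HB)) as [U [HU EU]].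
  assert (Up0: U (Pm al be t0)) by (apply EU; [apply Pm_S1; auto| auto]).
  destruct (HU _ Up0) as [e [He HUe]].
  exists (e/2). split; [lra|]. intros t [_ Ht].
  assert (Ut: U (Pm al be t)).
  { apply HUe. eapply Rle_lt_trans. apply dist_Pm; auto.
    assert (Rabs (t - t0) * 2 < e) by lra.
    assert (0 <= Rabs (t-t0)) by apply Rabs_pos.
    replace ((t-t0)^2) with (Rabs (t-t0) ^2) by (rewrite <- Rsqr_pow2, <- Rsqr_abs, Rsqr_pow2; auto).
    nra. }
  apply EU in Ut; [|apply Pm_S1; auto].
  destruct (HBq _ Ut) as [Hqc Hd].
  destruct (fPm X C f g c t Hh Cc) as [Cq _]. fold al be in Cq.
  rewrite (Fkey X C f g c a p0 (f (Pm al be t))) in Hd by auto.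
  rewrite Rabs_minus_sym in Hd. auto.
Qed.

Lemma h_big (X:EMS) (C:X->Prop) f g c a M: is_circle X C -> homeo_on R2_open ems_open S1 C f g -> C c ->
  C a -> a <> c ->
  exists t0, forall t, t0 < Rabs t -> M < DD c a (f (Pm (fst (g c)) (snd (g c)) t)).
Proof.
  intros Hc Hh Cc Ca Ha.
  set (al := fst (g c)) in *. set (be := snd (g c)) in *.
  assert (H1: al^2+be^2 = 1) by (apply (gc_S1 X C f g c Hh Cc)).
  destruct (est2 X c a M Ha) as [B [HB [Bc HBq]]].
  pose proof Hh as Hh'. destruct Hh' as [_ [Hg [_ [Hfg [Ho1 _]]]]].
  destruct (Ho1 B (basic_ems X B HB)) as [U [HU EU]].
  assert (Uc: U (g c)) by (apply EU; [apply Hg; auto| rewrite Hfg; auto]).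
  destruct (HU _ Uc) as [e [He HUe]].
  exists (2/e). intros t Ht.
  destruct (fPm X C f g c t Hh Cc) as [Cq [Hqc _]]. fold al be in Cq, Hqc.
  apply HBq; auto. apply EU; [apply Pm_S1; auto|]. apply HUe.
  fold al be. rewrite dist_pole by auto.
  assert (0 < 2/e) by (apply Rdiv_lt_0_compat; lra).
  assert (Hte: 2 < Rabs t * e).
  { apply (Rmult_lt_compat_r e) in Ht; auto. replace (2/e*e) with 2 in Ht by (field; lra). lra. }
  assert (t*t = Rabs t * Rabs t) by (rewrite <- Rabs_mult; rewrite Rabs_right; auto; apply Rle_ge; nra).
  pose proof (den_pos t).
  apply div_lt_l; auto. nra.
Qed.

Lemma F_surj (X:EMS) (C:X->Prop) f g c a y: is_circle X C -> homeo_on R2_open ems_open S1 C f g -> C c ->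
  C a -> a <> c ->
  exists p, C p /\ p <> c /\ Fc g c a p = y.
Proof.
  intros Hc Hh Cc Ca Ha.
  set (al := fst (g c)) in *. set (be := snd (g c)) in *.
  set (h := fun t => Fc g c a (f (Pm al be t))).
  set (ta := Tc g c a).
  destruct (h_big X C f g c a (Rabs y) Hc Hh Cc Ca Ha) as [t0 Ht0].
  fold al be in Ht0.
  set (t1 := - (Rabs t0 + Rabs ta + 1)). set (t2 := Rabs t0 + Rabs ta + 1).
  pose proof (Rabs_pos t0). pose proof (Rabs_pos ta). pose proof (Rle_abs ta). pose proof (Rle_abs (-ta)).
  rewrite Rabs_Ropp in H2. pose proof (Rle_abs t0).
  destruct (fPm X C f g c t1 Hh Cc) as [C1 [N1 T1]]. fold al be in C1, N1, T1.
  destruct (fPm X C f g c t2 Hh Cc) as [C2 [N2 T2]]. fold al be in C2, N2, T2.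
  assert (Hh1: h t1 < y).
  { unfold h, Fc. rewrite T1. destruct (Rlt_dec _ t1). unfold t1 in r; fold ta in r; lra.
    assert (t0 < Rabs t1) by (unfold t1; rewrite Rabs_Ropp, Rabs_right; lra).
    specialize (Ht0 t1 H4). pose proof (Rle_abs (-y)). rewrite Rabs_Ropp in H5. lra. }
  assert (Hh2: y < h t2).
  { unfold h, Fc. rewrite T2. destruct (Rlt_dec _ t2). 2: { unfold t2 in n; fold ta in n; lra. }
    assert (t0 < Rabs t2) by (unfold t2; rewrite Rabs_right; lra).
    specialize (Ht0 t2 H4). pose proof (Rle_abs y). lra. }
  assert (Hcont: continuity (fun t => h t - y)).
  { apply continuity_minus. apply (h_cont X C f g c a Hc Hh Cc Ca Ha). apply continuity_const. intros u v; auto. }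
  destruct (IVT (fun t => h t - y) t1 t2 Hcont) as [z [_ Hz]].
  unfold t1, t2; lra. lra. lra.
  destruct (fPm X C f g c z Hh Cc) as [Cz [Nz _]]. fold al be in Cz, Nz.
  exists (f (Pm al be z)). split; auto. split; auto. unfold h in Hz. lra.
Qed.

Definition sdist (u v : option R) : R :=
  match u, v with Some x, Some y => Rabs (x - y) | None, None => 0 | _, _ => 1 end.

Definition relopen {X:EMS} (C : X -> Prop) (W : X -> Prop) :=
  forall p, C p -> W p -> exists B, basic_open B /\ B p /\ forall q, C q -> B q -> W q.

Definition stdopen (O : option R -> Prop) :=
  (forall x, O (Some x) -> exists e, 0 < e /\ forall y, Rabs (y - x) < e -> O (Some y)) /\
  (O None -> exists M, forall y, M < Rabs y -> O (Some y)).

Lemma absdiv u v: Rabs (u / v) = Rabs u / Rabs v.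
Proof. unfold Rdiv. rewrite Rabs_mult, Rabs_inv. auto. Qed.

Lemma model (X:EMS) (C:X->Prop) (a b c : X): is_circle X C -> C a -> C b -> C c ->
  a <> b -> a <> c -> b <> c ->
  exists (s : X -> option R) (sg : option R -> X) (rho : X -> R),
  (forall u, C (sg u) /\ s (sg u) = u) /\
  (forall p, C p -> sg (s p) = p) /\
  s a = Some 0 /\ s b = Some 1 /\ s c = None /\
  (forall p q, C p -> C q -> dfac p q = sdist (s p) (s q) * rho p * rho q) /\
  (forall p, C p -> rho p <> 0) /\
  (forall W, relopen C W -> stdopen (fun u => W (sg u))) /\
  (forall O, stdopen O -> relopen C (fun p => O (s p))).
Proof.
  intros Hcirc Ca Cb Cc ab ac bc.
  pose proof Hcirc as [[f [g Hh]] _].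
  set (F := Fc g c a).
  assert (Fa: F a = 0) by apply F_a.
  assert (Key: forall p q, C p -> C q -> p <> c -> q <> c -> DD c p q = Rabs (F p - F q)).
  { intros; apply (Fkey X C f g c a p q); auto. }
  assert (Fb0: F b <> 0).
  { intro E. pose proof (DD_pos X c a b ab ac bc). rewrite (Key a b) in H by auto.
    rewrite Fa, E in H. rewrite Rminus_0_r, Rabs_R0 in H. lra. }
  set (k := Rabs (F b)).
  assert (Hk: 0 < k) by (apply Rabs_pos_lt; auto).
  set (s := fun p => if excluded_middle_informative (p = c) then None else Some (F p / F b)).
  assert (s_c: s c = None). { unfold s. destruct (excluded_middle_informative (c = c)); auto. congruence. }
  assert (s_nc: forall p, p <> c -> s p = Some (F p / F b)).
  { intros p Hp. unfold s. destruct (excluded_middle_informative (p = c)); auto. congruence. }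
  assert (s_None: forall p, s p = None -> p = c).
  { intros p Hp. destruct (classic (p = c)); auto. rewrite s_nc in Hp; auto. discriminate. }
  assert (Hsurj: forall u, exists p, C p /\ s p = u).
  { intros [y|].
    - destruct (F_surj X C f g c a (y * F b) Hcirc Hh Cc Ca ac) as [p [Cp [Hp Fp]]].
      exists p. split; auto. rewrite s_nc by auto. f_equal. fold F in Fp. rewrite Fp. field; auto.
    - exists c. auto. }
  set (sg := fun u => proj1_sig (constructive_indefinite_description _ (Hsurj u))).
  assert (Hsg: forall u, C (sg u) /\ s (sg u) = u).
  { intros u. unfold sg. destruct (constructive_indefinite_description _ (Hsurj u)); auto. }
  assert (s_inj: forall p q, C p -> C q -> s p = s q -> p = q).
  { intros p q Cp Cq E. destruct (classic (p = c)) as [->|Hp].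
    - rewrite s_c in E. symmetry; apply s_None; auto.
    - destruct (classic (q = c)) as [->|Hq].
      + rewrite s_c in E. apply s_None; auto.
      + rewrite !s_nc in E by auto. injection E as E.
        assert (F p = F q). { apply (Rmult_eq_reg_r (/ F b)). exact E. apply Rinv_neq_0_compat; auto. }
        destruct (classic (p = q)); auto. exfalso.
        pose proof (DD_pos X c p q H0 Hp Hq). rewrite Key in H1 by auto. rewrite H, Rminus_diag, Rabs_R0 in H1. lra. }
  set (rho := fun p => if excluded_middle_informative (p = c) then / sqrt k else sqrt k * dfac p c).
  assert (Hsq: 0 < sqrt k) by (apply sqrt_lt_R0; auto).
  assert (Hsqk: sqrt k * sqrt k = k) by (apply sqrt_sqrt; lra).
  exists s, sg, rho.
  split; [auto|]. split.
  { intros p Cp. apply s_inj; auto. apply Hsg. apply Hsg. }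
  split. { rewrite s_nc by auto. rewrite Fa. f_equal. unfold Rdiv. ring. }
  split. { rewrite s_nc by auto. f_equal. field; auto. }
  split; [auto|]. split.
  { intros p q Cp Cq. unfold rho.
    destruct (excluded_middle_informative (p = c)) as [->|Hp];
    destruct (excluded_middle_informative (q = c)) as [->|Hq].
    - rewrite dfac_refl, s_c. simpl. ring.
    - rewrite s_c, (s_nc q Hq). simpl. rewrite dfac_sym. field. lra.
    - rewrite s_c, (s_nc p Hp). simpl. field. lra.
    - rewrite (s_nc p Hp), (s_nc q Hq). simpl.
      assert (E: dfac p q = DD c p q * (dfac p c * dfac q c)).
      { unfold DD. field. split; apply Rgt_not_eq, dfac_pos; auto. }
      rewrite E, Key by auto.
      replace (F p / F b - F q / F b) with ((F p - F q) / F b) by (field; auto).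
      rewrite absdiv. fold k.
      replace (Rabs (F p - F q) / k * (sqrt k * dfac p c) * (sqrt k * dfac q c))
        with (Rabs (F p - F q) / k * (sqrt k * sqrt k) * dfac p c * dfac q c) by ring.
      rewrite Hsqk. field. lra. }
  split.
  { intros p Cp. unfold rho. destruct (excluded_middle_informative (p = c)).
    - apply Rinv_neq_0_compat; lra.
    - apply Rgt_not_eq. apply Rmult_lt_0_compat; auto. apply dfac_pos; auto. }
  split.
  - intros W HW. split.
    + intros x Wx. destruct (Hsg (Some x)) as [Cp Sp].
      set (p := sg (Some x)) in *.
      assert (Hpc: p <> c). { intro E. rewrite E, s_c in Sp. discriminate. }
      destruct (HW p Cp Wx) as [B [HB [Bp HBW]]].
      destruct (est3 X c p B Hpc HB Bp) as [eps [Heps HBq]].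
      exists (eps / k). split; [apply Rdiv_lt_0_compat; auto|].
      intros y Hy. destruct (Hsg (Some y)) as [Cq Sq].
      set (q := sg (Some y)) in *.
      assert (Hqc: q <> c). { intro E. rewrite E, s_c in Sq. discriminate. }
      apply HBW; auto. apply HBq; auto.
      rewrite Key by auto.
      rewrite s_nc in Sp, Sq by auto. injection Sp as Sp. injection Sq as Sq.
      replace (F p - F q) with ((x - y) * F b) by (rewrite <- Sp, <- Sq; field; auto).
      rewrite Rabs_mult. fold k. rewrite Rabs_minus_sym.
      apply (Rmult_lt_compat_r k) in Hy; auto. replace (eps / k * k) with eps in Hy by (field; lra). auto.
    + intros Wc. destruct (Hsg None) as [Cp Sp]. apply s_None in Sp. rewrite Sp in Wc.
      destruct (HW c Cc Wc) as [B [HB [Bc HBW]]].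
      destruct (est4 X c a B ac HB Bc) as [M HM].
      exists (M / k). intros y Hy. destruct (Hsg (Some y)) as [Cq Sq].
      set (q := sg (Some y)) in *.
      assert (Hqc: q <> c). { intro E. rewrite E, s_c in Sq. discriminate. }
      apply HBW; auto. apply HM; auto.
      rewrite Key by auto. rewrite Fa.
      rewrite s_nc in Sq by auto. injection Sq as Sq.
      replace (0 - F q) with (- y * F b) by (rewrite <- Sq; field; auto).
      rewrite Rabs_mult, Rabs_Ropp. fold k.
      apply (Rmult_lt_compat_r k) in Hy; auto. replace (M / k * k) with M in Hy by (field; lra). auto.
  - intros O [HO1 HO2] p Cp Op. destruct (classic (p = c)) as [->|Hp].
    + rewrite s_c in Op. destruct (HO2 Op) as [M HM].
      destruct (est2 X c a (M * k) ac) as [B [HB [Bc HBq]]].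
      exists B. split; auto. split; auto. intros q Cq Bq.
      destruct (classic (q = c)) as [->|Hq]; [rewrite s_c; auto|].
      specialize (HBq q Bq Hq). rewrite Key, Fa in HBq by auto.
      rewrite s_nc by auto. apply HM.
      rewrite absdiv. fold k. apply div_gt_l; auto.
      rewrite <- Rabs_Ropp. replace (- F q) with (0 - F q) by ring. auto.
    + rewrite s_nc in Op by auto. destruct (HO1 _ Op) as [e [He HE]].
      destruct (est1 X c p (e * k) Hp) as [B [HB [Bp HBq]]]. apply Rmult_lt_0_compat; auto.
      exists B. split; auto. split; auto. intros q Cq Bq.
      destruct (HBq q Bq) as [Hq Hd].
      rewrite Key in Hd by auto.
      rewrite s_nc by auto. apply HE.
      replace (F q / F b - F p / F b) with ((F q - F p) / F b) by (field; auto).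
      rewrite absdiv. fold k. apply div_lt_l; auto. rewrite Rabs_minus_sym. auto.
Qed.

Lemma relopen_of_ems (X:EMS) (C:X->Prop) V: ems_open V -> relopen C V.
Proof. intros HV p Cp Vp. destruct (HV p Vp) as [B [HB [Bp HBV]]]. exists B. auto. Qed.

Lemma ems_of_relopen (X:EMS) (C:X->Prop) W: relopen C W ->
  exists U, ems_open U /\ forall a, C a -> (W a <-> U a).
Proof.
  intros HW. exists (fun q => exists p B, C p /\ W p /\ basic_open B /\ B p /\
     (forall q', C q' -> B q' -> W q') /\ B q).
  split.
  - intros q [p [B [Cp [Wp [HB [Bp [HBW Bq]]]]]]]. exists B. split; auto. split; auto.
    intros q' Bq'. exists p, B. auto 10.
  - intros a Ca. split.
    + intros Wa. destruct (HW a Ca Wa) as [B [HB [Ba HBW]]]. exists a, B. auto 10.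
    + intros [p [B [Cp [Wp [HB [Bp [HBW Ba]]]]]]]. auto.
Qed.

Lemma crt_exp (X:EMS) (C:X->Prop) (s:X->option R) (rho:X->R)
  (M4 : forall p q, C p -> C q -> dfac p q = sdist (s p) (s q) * rho p * rho q) x y z w:
  C x -> C y -> C z -> C w ->
  crt x y z w = ((rho x*rho y*rho z*rho w) * (sdist (s x) (s y) * sdist (s z) (s w)),
                 (rho x*rho y*rho z*rho w) * (sdist (s x) (s z) * sdist (s y) (s w)),
                 (rho x*rho y*rho z*rho w) * (sdist (s x) (s w) * sdist (s y) (s z))).
Proof.
  intros. unfold crt. rewrite !M4 by auto. f_equal; [f_equal|]; ring.
Qed.

Lemma pe K1 K2 A B D: K1 <> 0 -> K2 <> 0 -> proj_eq (K1*A, K1*B, K1*D) (K2*A, K2*B, K2*D).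
Proof.
  intros H1 H2. exists (K1/K2). simpl. split.
  - unfold Rdiv. apply Rmult_integral_contrapositive_currified; auto. apply Rinv_neq_0_compat; auto.
  - split; [|split]; field; auto.
Qed.

Lemma uniq_alg u v K1 K2: K1 <> 0 -> K2 <> 0 ->
  proj_eq (K1*(sdist u (Some 0) * sdist (Some 1) None), K1*(sdist u (Some 1)*sdist (Some 0) None),
           K1*(sdist u None * sdist (Some 0) (Some 1)))
          (K2*(sdist v (Some 0) * sdist (Some 1) None), K2*(sdist v (Some 1)*sdist (Some 0) None),
           K2*(sdist v None * sdist (Some 0) (Some 1))) -> u = v.
Proof.
  intros H1 H2 [t [Ht [e1 [e2 e3]]]].
  destruct u as [x|], v as [y|]; auto; simpl in e1, e2, e3;
  replace (Rabs (0 - 1)) with 1 in e3 by (rewrite Rabs_left; lra).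
  - assert (E: K1 = t * K2) by lra. rewrite E in e1, e2.
    assert (A1: Rabs (x - 0) = Rabs (y - 0)).
    { apply (Rmult_eq_reg_l (t*K2)). transitivity (t*K2*(Rabs (x-0)*1)); [ring| rewrite e1; ring].
      apply Rmult_integral_contrapositive_currified; auto. }
    assert (A2: Rabs (x - 1) = Rabs (y - 1)).
    { apply (Rmult_eq_reg_l (t*K2)). transitivity (t*K2*(Rabs (x-1)*1)); [ring| rewrite e2; ring].
      apply Rmult_integral_contrapositive_currified; auto. }
    f_equal. revert A1 A2. unfold Rabs.
    destruct (Rcase_abs (x-0)), (Rcase_abs (y-0)), (Rcase_abs (x-1)), (Rcase_abs (y-1)); intros; lra.
  - exfalso. apply H1. lra.
  - exfalso. apply (Rmult_integral_contrapositive_currified t K2 Ht H2). lra.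
Qed.

Theorem theorem1p5 :
  forall (X X' : EMS), Ptolemy X -> Ptolemy X' ->
  forall (C : X -> Prop) (C' : X' -> Prop),
    is_circle X C -> is_circle X' C' ->
  forall (x1 x2 x3 : X) (y1 y2 y3 : X'),
    C x1 -> C x2 -> C x3 -> x1 <> x2 -> x1 <> x3 -> x2 <> x3 ->
    C' y1 -> C' y2 -> C' y3 -> y1 <> y2 -> y1 <> y3 -> y2 <> y3 ->
    exists phi : X -> X',
      (moebius_homeo C C' phi /\ phi x1 = y1 /\ phi x2 = y2 /\ phi x3 = y3) /\
      (forall phi2 : X -> X',
         moebius_homeo C C' phi2 -> phi2 x1 = y1 -> phi2 x2 = y2 -> phi2 x3 = y3 ->
         forall x, C x -> phi2 x = phi x).
Proof.
  intros X X' _ _ C C' HC HC' x1 x2 x3 y1 y2 y3 C1 C2 C3 n12 n13 n23 C1' C2' C3' m12 m13 m23.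
  destruct (model X C x1 x2 x3 HC C1 C2 C3 n12 n13 n23)
    as [s [sg [rho [M1 [M2 [Ma [Mb [Mc [M4 [M5 [M6 M7]]]]]]]]]]].
  destruct (model X' C' y1 y2 y3 HC' C1' C2' C3' m12 m13 m23)
    as [s' [sg' [rho' [M1' [M2' [Ma' [Mb' [Mc' [M4' [M5' [M6' M7']]]]]]]]]]].
  exists (fun x => sg' (s x)). split.
  - split; [split|].
    + exists (fun y => sg (s' y)). split; [|split; [|split; [|split; [|split]]]].
      * intros; apply M1'.
      * intros; apply M1.
      * intros a Ca. rewrite (proj2 (M1' _)). apply M2; auto.
      * intros b Cb. rewrite (proj2 (M1 _)). apply M2'; auto.
      * intros V HV. apply (relopen_of_ems X' C') in HV. apply M6' in HV. apply M7 in HV.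
        apply ems_of_relopen in HV. destruct HV as [U [HU EU]]. exists U. split; auto.
      * intros U HU. apply (relopen_of_ems X C) in HU. apply M6 in HU. apply M7' in HU.
        apply ems_of_relopen in HU. destruct HU as [V [HV EV]]. exists V. split; auto.
    + split.
      * intros a b Ca Cb E. apply (f_equal s') in E. rewrite (proj2 (M1' _)), (proj2 (M1' _)) in E.
        rewrite <- (M2 a Ca), <- (M2 b Cb), E. auto.
      * intros x y z w Cx Cy Cz Cw _.
        rewrite (crt_exp X' C' s' rho' M4') by apply M1'.
        rewrite (crt_exp X C s rho M4) by auto.
        rewrite !(proj2 (M1' _)).
        apply pe.
        -- repeat apply Rmult_integral_contrapositive_currified; apply M5'; apply M1'.
        -- repeat apply Rmult_integral_contrapositive_currified; apply M5; auto.
    + rewrite Ma, Mb, Mc, <- Ma', <- Mb', <- Mc', !M2'; auto.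
  - intros phi2 [[psi Hh2] [Hinj Hcrt]] e1 e2 e3 p Cp.
    assert (Cq: C' (phi2 p)) by (destruct Hh2 as [H _]; auto).
    assert (Had: admissible p x1 x2 x3).
    { unfold admissible. repeat split; intros [E1 E2]; subst; auto. }
    pose proof (Hcrt p x1 x2 x3 Cp C1 C2 C3 Had) as Hp.
    rewrite e1, e2, e3 in Hp.
    rewrite (crt_exp X' C' s' rho' M4') in Hp by auto.
    rewrite (crt_exp X C s rho M4) in Hp by auto.
    rewrite Ma, Mb, Mc, Ma', Mb', Mc' in Hp.
    apply uniq_alg in Hp.
    + rewrite <- (M2' _ Cq), Hp. auto.
    + repeat apply Rmult_integral_contrapositive_currified; auto.
    + repeat apply Rmult_integral_contrapositive_currified; auto.
Qed.
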